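(* Let $n,m\ge1$ be integers (not necessarily distinct). Then for the Ramsey number $\mathcal{R}_{\mathcal{MAT}}$ with respect to the class $\mathcal{MAT}$ of matrix graphs, \[ \mathcal{R}_{\mathcal{MAT}}(n,m)=\mathcal{R}_{\mathcal{PO}}(n,m)=(n-1)(m-1)+1 . \]
   Context: For a commutative ring $R$ (with $1\ne0$) that is not a field and an integer $j\ge2$, let $V$ be the set of $j\times j$ matrices over $R$ whose determinant is a proper element (non-zero non-unit) of $R$. The matrix graph $\mathrm{Mat}(R)$ has vertex set $V$, distinct $A,B$ adjacent iff $\det(A)\parallel\det(B)$ or $\det(B)\parallel\det(A)$, where $a\parallel b$ means $a\mid b$ and $b\nmid a$. $\mathcal{MAT}$ is the class of all matrix graphs (over all such $R$ and $j$). $\mathcal{PO}$ is the class of partial order graphs $G_A$ of posets $(A,\le)$ (distinct vertices adjacent iff comparable). For a class $\mathcal{C}$ of graphs, $\mathcal{R}_{\mathcal{C}}(n,m)$ is the minimal $r$ such that every induced subgraph with $r$ vertices of any graph in $\mathcal{C}$ contains either $K_n$ or an independent set of $m$ vertices. *)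

(* Defs.v *)
From HB Require Import structures.
From mathcomp Require Import all_boot all_order all_algebra.
Set Implicit Arguments. Unset Strict Implicit. Unset Printing Implicit Defensive.
Import Order.TTheory GRing.Theory.
Local Open Scope ring_scope.

(* An induced subgraph with r vertices is given by an injective map S : 'I_r -> V
   (its image is the r-element vertex subset). *)

Definition has_clique (V : Type) (adj : V -> V -> Prop) (r : nat) (S : 'I_r -> V)
  (n : nat) : Prop :=
  exists f : 'I_n -> 'I_r, injective f /\
    (forall i j : 'I_n, i <> j -> adj (S (f i)) (S (f j))).

Definition has_indep (V : Type) (adj : V -> V -> Prop) (r : nat) (S : 'I_r -> V)
  (m : nat) : Prop :=
  exists f : 'I_m -> 'I_r, injective f /\
    (forall i j : 'I_m, i <> j -> ~ adj (S (f i)) (S (f j))).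

Definition ramsey_good (V : Type) (adj : V -> V -> Prop) (n m r : nat) : Prop :=
  forall S : 'I_r -> V, injective S -> has_clique adj S n \/ has_indep adj S m.

Definition is_least (P : nat -> Prop) (r : nat) : Prop :=
  P r /\ (forall r', P r' -> (r <= r')%N).

Definition rdvd (R : comNzRingType) (a b : R) : Prop := exists c : R, b = a * c.
Definition runit (R : comNzRingType) (a : R) : Prop := exists c : R, a * c = 1.
Definition sdvd (R : comNzRingType) (a b : R) : Prop := rdvd a b /\ ~ rdvd b a.
Definition proper_elt (R : comNzRingType) (a : R) : Prop := a <> 0 /\ ~ runit a.
Definition is_field (R : comNzRingType) : Prop := forall a : R, a <> 0 -> runit a.

Definition mat_vertex (R : comNzRingType) (j : nat) : Type :=
  {A : 'M[R]_j | proper_elt (\det A)}.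

Definition mat_adj (R : comNzRingType) (j : nat) (A B : mat_vertex R j) : Prop :=
  sdvd (\det (sval A)) (\det (sval B)) \/ sdvd (\det (sval B)) (\det (sval A)).

Definition MAT_good (n m r : nat) : Prop :=
  forall (R : comNzRingType) (j : nat), (2 <= j)%N -> ~ is_field R ->
    ramsey_good (@mat_adj R j) n m r.

Definition po_adj (d : Order.disp_t) (T : porderType d) (x y : T) : Prop :=
  ((x <= y)%O || (y <= x)%O).

Definition PO_good (n m r : nat) : Prop :=
  forall (d : Order.disp_t) (T : porderType d), ramsey_good (@po_adj d T) n m r.

(* Main.v *)
Require Import Defs.
Set Implicit Arguments.
From mathcomp Require Import all_boot all_order all_algebra.
From mathcomp Require Import zify.

Section Gen.
Variables (T : finType) (lt : rel T).
Hypotheses (ltirr : irreflexive lt) (lttr : transitive lt).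
Definition cmp x y := lt x y || lt y x.

Lemma max_exists (C : {set T}) x0 : x0 \in C ->
  exists2 x, x \in C & forall y, y \in C -> ~~ lt x y.
Proof.
move=> x0C.
case: (@arg_maxnP T x0 (mem C) (fun x => #|[set y in C | lt y x]|) x0C) => x xC xmax.
exists x => // y yC; apply/negP => lxy.
have := xmax y yC.
suff : #|[set z in C | lt z x]| < #|[set z in C | lt z y]| by move=> h1 h2; move: (leq_ltn_trans h2 h1); rewrite ltnn.
apply: proper_card; apply/properP; split.
  apply/subsetP => z; rewrite !inE => /andP[-> lzx] /=; exact: lttr lzx lxy.
exists x; rewrite !inE ?lxy ?ltirr ?andbT ?andbF //; exact: xC.
Qed.

Lemma chain_antichain m k : forall A : {set T}, k * m.-1 < #|A| ->
  (exists C : {set T}, [/\ C \subset A, k.+1 <= #|C| &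
       {in C &, forall x y, x != y -> cmp x y}]) \/
  (exists C : {set T}, [/\ C \subset A, m <= #|C| &
       {in C &, forall x y, x != y -> ~~ cmp x y}]).
Proof.
elim: k => [|k IH] A hA.
  left; move: hA; rewrite mul0n card_gt0 => /set0Pn [x xA].
  exists [set x]; split; first by rewrite sub1set.
    by rewrite cards1.
  by move=> y z; rewrite !inE => /eqP -> /eqP ->; rewrite eqxx.
pose M := [set x in A | [forall y in A, ~~ lt x y]].
have MA : M \subset A by apply/subsetP => x; rewrite inE => /andP[].
case: (leqP m #|M|) => hM.
  right; exists M; split => // x y; rewrite !inE => /andP[xA /forall_inP hx] /andP[yA /forall_inP hy] _.
  by rewrite /cmp negb_or hx // hy.
have hcard : #|A :\: M| = #|A| - #|M|.
  by rewrite cardsD (setIidPr MA).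
have hA' : k * m.-1 < #|A :\: M| by rewrite hcard; move: hA hM; rewrite mulSn; lia.
have sub' : A :\: M \subset A by apply: subsetDl.
case: (IH _ hA') => [[C [CA hC Cc]]|[C [CA hC Cc]]]; last first.
  by right; exists C; split => //; exact: subset_trans CA sub'.
have [x0 x0C] : exists x, x \in C.
  by apply/set0Pn; rewrite -card_gt0; apply: leq_trans hC.
have [x xC xmax] := max_exists (x0:=x0) x0C.
have xAM : x \in A :\: M by apply: (subsetP CA).
move: xAM; rewrite !inE => /andP[hx xA]; move: hx; rewrite xA /=.
rewrite negb_forall => /existsP [y]; rewrite negb_imply negbK => /andP[yA lxy].
have yC : y \notin C by apply/negP => yC; move: (xmax y yC); rewrite lxy.
left; exists (y |: C); split.
- by rewrite subUset sub1set yA (subset_trans CA sub').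
- by rewrite cardsU1 yC add1n ltnS.
- have key : forall z, z \in C -> lt z y.
    move=> z zC; case: (eqVneq z x) => [->//|zx].
    have := Cc z x zC xC zx; rewrite /cmp; case/orP => [lzx|lxz]; first exact: lttr lzx lxy.
    by move: (xmax z zC); rewrite lxz.
  move=> a b; rewrite !inE => /orP[/eqP->|aC] /orP[/eqP->|bC].
  + by rewrite eqxx.
  + by move=> _; rewrite /cmp (key b bC) orbT.
  + by move=> _; rewrite /cmp (key a aC).
  + exact: Cc.
Qed.

Lemma set_to_fun (C : {set T}) k : k <= #|C| ->
  exists f : 'I_k -> T, injective f /\ forall i, f i \in C.
Proof.
move=> hk; exists (fun i => enum_val (widen_ord hk i)); split.
  move=> i j /enum_val_inj /(congr1 val) /= h; exact: val_inj.
move=> i; exact: enum_valP.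
Qed.
End Gen.

Lemma upper_gen (V : Type) (adj : V -> V -> Prop) (n m r : nat) (S : 'I_r -> V)
  (lt : rel 'I_r) : irreflexive lt -> transitive lt ->
  (forall i j, i != j -> (adj (S i) (S j) <-> @cmp _ lt i j)) ->
  (1 <= n)%N -> ((n - 1) * (m - 1) < r)%N ->
  has_clique adj S n \/ has_indep adj S m.
Proof.
move=> irr tr hadj n1 hr.
have hA : (n.-1 * m.-1 < #|[set: 'I_r]|)%N by rewrite cardsT card_ord; move: hr; rewrite -!subn1.
case: (@chain_antichain _ lt irr tr m n.-1 _ hA) => [[C [_ hC Cc]]|[C [_ hC Cc]]].
  left; rewrite prednK // in hC; have [f [finj fC]] := set_to_fun _ _ hC.
  exists f; split => // i j ij; apply/hadj.
    by apply/negP => /eqP /finj.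
  by apply: Cc => //; apply/negP => /eqP /finj.
right; have [f [finj fC]] := set_to_fun _ _ hC.
exists f; split => // i j ij hij.
have fij : f i != f j by apply/negP => /eqP /finj.
have := (hadj _ _ fij).1 hij; apply/negP; exact: Cc.
Qed.
Unset Strict Implicit.

Lemma lower_gen (V : Type) (adj : V -> V -> Prop) (n m r : nat) (S : 'I_r -> V)
  (lab : 'I_r -> 'I_m.-1 * 'I_n.-1) : injective lab ->
  (forall i j, i != j -> (adj (S i) (S j) <-> (lab i).1 = (lab j).1)) ->
  (1 <= n)%N -> (1 <= m)%N -> ~ has_clique adj S n /\ ~ has_indep adj S m.
Proof.
move=> labi hadj n1 m1; split.
  case=> f [finj fadj].
  have x0 : 'I_n by rewrite -(prednK n1); exact: ord0.
  have same : forall x, (lab (f x)).1 = (lab (f x0)).1.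
    move=> x; case: (eqVneq x x0) => [->//|xx0].
    have fx : f x != f x0 by apply/negP => /eqP /finj /eqP; rewrite (negbTE xx0).
    apply/(hadj _ _ fx); apply: fadj; exact/eqP.
  have ginj : injective (fun x => (lab (f x)).2).
    move=> x y h; apply: finj; apply: labi.
    by move: h (same x) (same y); case: (lab (f x)) => a b; case: (lab (f y)) => c d /= -> -> ->.
  by move: (leq_card _ ginj); rewrite !card_ord; lia.
case=> f [finj fadj].
have ginj : injective (fun x => (lab (f x)).1).
  move=> x y h; case: (eqVneq x y) => // xy; exfalso.
  have fx : f x != f y by apply/negP => /eqP /finj /eqP; rewrite (negbTE xy).
  apply: (fadj x y); first exact/eqP.
  exact/(hadj _ _ fx).
by move: (leq_card _ ginj); rewrite !card_ord; lia.
Qed.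

Definition e1 (n m : nat) (p : 'I_m.-1 * 'I_n.-1) := (p.1 * n + p.2 + 1)%N.
Definition e2 (n m : nat) (p : 'I_m.-1 * 'I_n.-1) := ((m - p.1) * n + p.2 + 1)%N.

Lemma ar (n m i k i' k' : nat) : (k < n)%N -> (k' < n)%N -> (i < m)%N -> (i' < m)%N ->
  (i * n + k + 1 <= i' * n + k' + 1)%N -> ((m - i) * n + k + 1 <= (m - i') * n + k' + 1)%N ->
  i = i' /\ (k <= k')%N.
Proof.
move=> kn k'n im i'm h1 h2.
case: (ltngtP i i') => [ii|ii|ii].
- have : ((m - i') * n + n <= (m - i) * n)%N.
    rewrite addnC -mulSn leq_mul2r; apply/orP; right; lia.
  lia.
- have : (i' * n + n <= i * n)%N by rewrite addnC -mulSn leq_mul2r ii orbT.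
  lia.
- subst; split => //; lia.
Qed.

Lemma log23 (a b : nat) : (logn 2 (2^a * 3^b) = a /\ logn 3 (2^a * 3^b) = b)%N.
Proof.
by split; rewrite lognM ?expn_gt0 // !lognX !logn_prime //= muln0 ?muln1 ?addn0.
Qed.

Lemma dvd23 (a b c d : nat) : dvdn (2 ^ a * 3 ^ b) (2 ^ c * 3 ^ d) = (a <= c)%N && (b <= d)%N.
Proof.
apply/idP/andP.
  move=> h; have hp : (0 < 2 ^ c * 3 ^ d)%N by rewrite muln_gt0 !expn_gt0.
  have h2 := dvdn_leq_log 2 hp h; have h3 := dvdn_leq_log 3 hp h.
  move: h2 h3; have [-> ->] := log23 a b; have [-> ->] := log23 c d; done.
case=> h1 h2; apply: dvdn_mul; exact: dvdn_exp2l.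
Qed.

Definition NN (n m : nat) (p : 'I_m.-1 * 'I_n.-1) := (2 ^ e1 p * 3 ^ e2 p)%N.

Lemma NN_le (n m : nat) (p q : 'I_m.-1 * 'I_n.-1) : (NN p %| NN q)%N -> p.1 = q.1 /\ (p.2 <= q.2)%N.
Proof.
rewrite /NN dvd23 /e1 /e2 => /andP[h1 h2].
have [] := @ar n m p.1 p.2 q.1 q.2 _ _ _ _ h1 h2.
- case: p {h1 h2} => a b /=; case: b => /=; lia.
- case: q {h1 h2} => a b /=; case: b => /=; lia.
- case: p {h1 h2} => a b /=; case: a => /=; lia.
- case: q {h1 h2} => a b /=; case: a => /=; lia.
by move=> /val_inj.
Qed.

Lemma NN_inj (n m : nat) : injective (@NN n m).
Proof.
move=> p q h.
have d1 : dvdn (NN p) (NN q) by rewrite h dvdnn.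
have d2 : dvdn (NN q) (NN p) by rewrite h dvdnn.
have [h1 h2] := @NN_le n m p q d1.
have [_ h3] := @NN_le n m q p d2.
case: p q h1 h2 h3 {h d1 d2} => a b [c d] /= -> h2 h3; congr pair; apply/val_inj/eqP; rewrite eqn_leq h2 h3.
done.
Qed.

Lemma NN_cmp (n m : nat) (p q : 'I_m.-1 * 'I_n.-1) : p != q ->
  ((NN p %| NN q)%N || (NN q %| NN p)%N) <-> p.1 = q.1.
Proof.
move=> pq; split.
  by case/orP => /NN_le [] // ->.
move=> h; rewrite /NN !dvd23 /e1 /e2 h.
case: (leqP p.2 q.2) => h2; [apply/orP; left|apply/orP; right]; apply/andP; split; lia.
Qed.
From Stdlib Require Import ClassicalEpsilon.
Import Order.TTheory GRing.Theory.

Definition pb (P : Prop) : bool := if excluded_middle_informative P then true else false.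
Lemma pbP (P : Prop) : pb P <-> P.
Proof. by rewrite /pb; case: excluded_middle_informative. Qed.

Section RingFacts.
Local Open Scope int_scope.
Local Open Scope ring_scope.
Lemma rdvd_refl (R : comNzRingType) (a : R) : rdvd a a.
Proof. by exists 1; rewrite mulr1. Qed.
Lemma rdvd_trans (R : comNzRingType) (a b c : R) : rdvd a b -> rdvd b c -> rdvd a c.
Proof. by move=> [x ->] [y ->]; exists (x * y); rewrite mulrA. Qed.

Lemma posz_rdvd (a b : nat) : rdvd (a%:Z) (b%:Z) <-> (dvdn a b).
Proof.
split.
  move=> [c h]; have := congr1 absz h; rewrite abszM /= => ->.
  exact: dvdn_mulr.
by move/dvdnP => [k ->]; exists (Posz k); rewrite PoszM mulrC.
Qed.
End RingFacts.

Lemma int_not_field : ~ is_field int.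
Proof.
move=> h; have [c hc] := h (Posz 2) (fun e => ltac:(discriminate e)).
have : rdvd (Posz 2) (Posz 1) by exists c.
by move/posz_rdvd.
Qed.

Lemma PO_upper n m : (1 <= n)%N -> PO_good n m ((n - 1) * (m - 1) + 1).
Proof.
move=> n1 d T S Sinj.
apply: (@upper_gen _ _ n m _ S (fun i j => (S i < S j)%O)) => //.
- by move=> i j k /= h1 h2; apply: Order.POrderTheory.lt_trans h2.
- move=> i j ij; have Sij : S i != S j by apply/negP => /eqP /Sinj /eqP; rewrite (negbTE ij).
  rewrite /po_adj /cmp !Order.POrderTheory.lt_neqAle Sij eq_sym Sij /=; done.
- by rewrite addn1.
Qed.

Lemma lab_exists n m r : (r <= (n - 1) * (m - 1))%N ->
  exists lab : 'I_r -> 'I_m.-1 * 'I_n.-1, injective lab.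
Proof.
move=> hr.
have hC : (r <= #|[set: 'I_m.-1 * 'I_n.-1]|)%N.
  by rewrite cardsT card_prod !card_ord -!subn1 mulnC.
have [f [finj _]] := set_to_fun _ _ hC; by exists f.
Qed.

Lemma PO_lower n m r : (1 <= n)%N -> (1 <= m)%N -> PO_good n m r ->
  ((n - 1) * (m - 1) + 1 <= r)%N.
Proof.
move=> n1 m1 H; rewrite leqNgt; apply/negP; rewrite addn1 ltnS => hr.
have [lab labi] := lab_exists hr.
pose S := fun i => (NN (lab i) : natdvd).
have Sinj : injective S by move=> i j /NN_inj /labi.
have hadj : forall i j, i != j -> (@po_adj _ natdvd (S i) (S j) <-> (lab i).1 = (lab j).1).
  move=> i j ij; rewrite /po_adj /S.
  apply: NN_cmp; by apply/negP => /eqP /labi /eqP; rewrite (negbTE ij).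
have [hc hi] := @lower_gen _ (@po_adj _ natdvd) n m r S lab labi hadj n1 m1.
by case: (H _ natdvd S Sinj).
Qed.

Lemma MAT_upper n m : (1 <= n)%N -> MAT_good n m ((n - 1) * (m - 1) + 1).
Proof.
move=> n1 R j hj nf S Sinj.
pose D := fun i => (\det (sval (S i)))%R.
apply: (@upper_gen _ _ n m _ S (fun i k => pb (Defs.sdvd (D i) (D k)))) => //.
- by move=> i /=; apply/negP => /pbP [_ []]; apply: rdvd_refl.
- move=> i k l /pbP [h1 h2] /pbP [h3 h4]; apply/pbP; split; first exact: rdvd_trans h1 h3.
  by move=> h; apply: h2; exact: rdvd_trans h.
- move=> i k _; rewrite /mat_adj /cmp; split.
    by case=> h; apply/orP; [left|right]; apply/pbP.
  by case/orP => /pbP h; [left|right].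
- by rewrite addn1.
Qed.

Section MatEx.
Local Open Scope ring_scope.
Variables (n m : nat).

Lemma NN_gt1 (p : 'I_m.-1 * 'I_n.-1) : (1 < NN p)%N.
Proof.
rewrite /NN /e1 addn1 expnS -mulnA.
have : (0 < 2 ^ (p.1 * n + p.2) * 3 ^ e2 p)%N by rewrite muln_gt0 !expn_gt0.
lia.
Qed.

Lemma det_ok (p : 'I_m.-1 * 'I_n.-1) :
  proper_elt (\det ((Posz (NN p * NN p))%:M : 'M[int]_2)).
Proof.
rewrite det_scalar expr2 -PoszM; have h := NN_gt1 p; split.
  move=> [] /eqP; rewrite muln_eq0 => /orP[] /eqP; lia.
move=> [c hc]; have : rdvd (Posz (NN p * NN p * (NN p * NN p))) (Posz 1) by exists c.
move/posz_rdvd; rewrite dvdn1 => /eqP; nia.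
Qed.

Definition VV (p : 'I_m.-1 * 'I_n.-1) : mat_vertex int 2 :=
  exist _ ((Posz (NN p * NN p))%:M : 'M[int]_2) (det_ok p).

Lemma detVV p : \det (sval (VV p)) = Posz (NN p * NN p * (NN p * NN p)).
Proof. by rewrite /= det_scalar expr2 -PoszM. Qed.
End MatEx.

Lemma MAT_lower n m r : (1 <= n)%N -> (1 <= m)%N -> MAT_good n m r ->
  ((n - 1) * (m - 1) + 1 <= r)%N.
Proof.
move=> n1 m1 H; rewrite leqNgt; apply/negP; rewrite addn1 ltnS => hr.
have [lab labi] := lab_exists hr.
pose S := fun i => VV (lab i).
have sq : forall a b : nat, dvdn (a * a * (a * a)) (b * b * (b * b)) = dvdn a b.
  by move=> a b; rewrite !mulnn !dvdn_pexp2r.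
have Sinj : injective S.
  move=> i j /(congr1 (fun A => (\det (sval A))%R)); rewrite /S !detVV => [[h]].
  apply: labi; apply: NN_inj; apply/eqP.
  rewrite eqn_dvd -(sq (NN (lab i)) (NN (lab j))) -(sq (NN (lab j)) (NN (lab i))) h dvdnn //.
have hadj : forall i j, i != j -> (@mat_adj int 2 (S i) (S j) <-> (lab i).1 = (lab j).1).
  move=> i j ij; have lij : lab i != lab j by apply/negP => /eqP /labi /eqP; rewrite (negbTE ij).
  rewrite -(NN_cmp lij) /mat_adj /Defs.sdvd /S !detVV !posz_rdvd !sq.
  have : NN (lab i) != NN (lab j) by apply/negP => /eqP /NN_inj /eqP; rewrite (negbTE lij).
  rewrite eqn_dvd; case: (dvdn (NN (lab i)) _); case: (dvdn (NN (lab j)) _) => //= _; intuition.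
have [hc hi] := @lower_gen _ (@mat_adj int 2) n m r S lab labi hadj n1 m1.
by case: (H int 2 isT int_not_field S Sinj).
Qed.

Theorem theorem3p16 (n m : nat) : (1 <= n)%N -> (1 <= m)%N ->
  is_least (MAT_good n m) ((n - 1) * (m - 1) + 1)%N /\
  is_least (PO_good n m) ((n - 1) * (m - 1) + 1)%N.
Proof.
move=> n1 m1; split; split.
- exact: MAT_upper.
- by move=> r; apply: MAT_lower.
- exact: PO_upper.
- by move=> r; apply: PO_lower.
Qed.
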